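(* Let $L^x,L^y>0$, let $i\neq j$ be two boxes, each box $k\in\{i,j\}$ having center $(c^x_k,c^y_k)$, side lengths $(\ell^x_k,\ell^y_k)$ and constants $lb^s_k>0$. Let $Q^{obj}$ be the set of $(c_i,c_j,\ell_i,\ell_j,d^x_{i,j},d^y_{i,j})\in\mathbb{R}^{10}$ with $\tfrac12\ell^s_k\le c^s_k\le L^s-\tfrac12\ell^s_k$, $\ell^s_k\ge lb^s_k$ for all $s\in\{x,y\},k\in\{i,j\}$, and $d^s_{i,j}\ge c^s_i-c^s_j$, $d^s_{i,j}\ge c^s_j-c^s_i$ for $s\in\{x,y\}$. Let $E$ be the set of $(c,\ell,d,z)$ with $(c,\ell,d)\in Q^{obj}$, $z=(z^s_{p,q})_{s\in\{x,y\},(p,q)\in\{(i,j),(j,i)\}}\in\{0,1\}^4$ not identically zero, $z^s_{i,j}+z^s_{j,i}\le1$ for each $s$, $z^s_{p,q}=1\Rightarrow\mathscr{B}_p\leftarrow_s\mathscr{B}_q$, and $z^s_{i,j}=z^s_{j,i}=0\Rightarrow(\mathscr{B}_i\not\leftarrow_s\mathscr{B}_j$ and $\mathscr{B}_j\not\leftarrow_s\mathscr{B}_i)$. Then for every $s\in\{x,y\}$ and $\{p,q\}=\{i,j\}$, all points of $E$ satisfy \begin{align*} d^s_{i,j}&\ge\tfrac12(\ell^s_i+\ell^s_j)-L^s(1-z^s_{i,j}-z^s_{j,i}),\\ d^s_{i,j}&\ge c^s_p-c^s_q+\ell^s_p+lb^s_q(z^s_{p,q}+z^s_{q,p})-L^s(1-z^s_{p,q}),\\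 d^s_{i,j}&\ge c^s_p-c^s_q+(lb^s_p+lb^s_q)z^s_{p,q},\\ 2d^s_{i,j}&\ge\ell^s_p-L^s(1-z^s_{p,q}-z^s_{q,p})+lb^s_q(z^s_{p,q}+z^s_{q,p}). \end{align*}
   Context: $\mathscr{B}_p\leftarrow_s\mathscr{B}_q$ means $c^s_p+\tfrac12\ell^s_p\le c^s_q-\tfrac12\ell^s_q$, and $\mathscr{B}_p\not\leftarrow_s\mathscr{B}_q$ means $c^s_p+\tfrac12\ell^s_p\ge c^s_q-\tfrac12\ell^s_q$. $E$ is the paper's embedding $\operatorname{Em}(Q^{obj},D^8,C^8)$; the variables $d^s_{i,j}$ linearize the Manhattan-distance objective $|c^s_i-c^s_j|$. In the paper $lb^s_k=\beta_k/ub^s_k$ with $ub^s_k=\min\{\sqrt{\alpha_k\beta_k},L^s\}$. *)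

(* Defs.v *)
From Stdlib Require Import Reals Lra.
Open Scope R_scope.

Inductive axis : Type := AX | AY.
Inductive box : Type := Bi | Bj.

Definition left_of (c l : axis -> box -> R) (s : axis) (p q : box) : Prop :=
  c s p + l s p / 2 <= c s q - l s q / 2.

Definition not_left_of (c l : axis -> box -> R) (s : axis) (p q : box) : Prop :=
  c s p + l s p / 2 >= c s q - l s q / 2.

(* Q^obj : c = centers, l = side lengths, d s = d^s_{i,j}. *)
Definition in_Qobj (L : axis -> R) (lb : axis -> box -> R)
    (c l : axis -> box -> R) (d : axis -> R) : Prop :=
  (forall s k, l s k / 2 <= c s k <= L s - l s k / 2) /\
  (forall s k, l s k >= lb s k) /\
  (forall s, d s >= c s Bi - c s Bj /\ d s >= c s Bj - c s Bi).

(* The embedding E = Em(Q^obj, D^8, C^8).  z s p q stands for z^s_{p,q};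
   only the entries with p <> q are meaningful. *)
Definition in_E (L : axis -> R) (lb : axis -> box -> R)
    (c l : axis -> box -> R) (d : axis -> R) (z : axis -> box -> box -> R) : Prop :=
  in_Qobj L lb c l d /\
  (forall s p q, p <> q -> z s p q = 0 \/ z s p q = 1) /\
  (exists s p q, p <> q /\ z s p q <> 0) /\
  (forall s, z s Bi Bj + z s Bj Bi <= 1) /\
  (forall s p q, p <> q -> z s p q = 1 -> left_of c l s p q) /\
  (forall s, z s Bi Bj = 0 -> z s Bj Bi = 0 ->
     not_left_of c l s Bi Bj /\ not_left_of c l s Bj Bi).

(* Main.v *)
Require Import Defs.
From Stdlib Require Import Reals Lra.
Open Scope R_scope.

Theorem proposition6p4 (L : axis -> R) (lb : axis -> box -> R)
  (HL : forall s, 0 < L s) (Hlb : forall s k, 0 < lb s k)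
  (c l : axis -> box -> R) (d : axis -> R) (z : axis -> box -> box -> R)
  (HE : in_E L lb c l d z) :
  forall (s : axis) (p q : box), p <> q ->
    d s >= (l s Bi + l s Bj) / 2 - L s * (1 - z s Bi Bj - z s Bj Bi) /\
    d s >= c s p - c s q + l s p + lb s q * (z s p q + z s q p)
             - L s * (1 - z s p q) /\
    d s >= c s p - c s q + (lb s p + lb s q) * z s p q /\
    2 * d s >= l s p - L s * (1 - z s p q - z s q p)
                 + lb s q * (z s p q + z s q p).
Proof.
  intros s p q Hpq.
  destruct HE as [[Hc [Hl Hd]] [H01 [_ [Hsum [Hleft Hnot]]]]].
  pose proof (Hc s Bi) as Ci. pose proof (Hc s Bj) as Cj.
  pose proof (Hl s Bi) as Li. pose proof (Hl s Bj) as Lj.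
  pose proof (Hd s) as D. pose proof (Hsum s) as S.
  pose proof (Hlb s Bi). pose proof (Hlb s Bj). pose proof (HL s).
  assert (Z1 : z s Bi Bj = 0 \/ z s Bi Bj = 1) by (apply H01; discriminate).
  assert (Z2 : z s Bj Bi = 0 \/ z s Bj Bi = 1) by (apply H01; discriminate).
  pose proof (fun h => Hleft s Bi Bj ltac:(discriminate) h) as LA.
  pose proof (fun h => Hleft s Bj Bi ltac:(discriminate) h) as LB.
  pose proof (Hnot s) as N.
  unfold left_of, not_left_of in *.
  destruct p, q; try (exfalso; apply Hpq; reflexivity);
  destruct Z1 as [Z1|Z1]; destruct Z2 as [Z2|Z2]; rewrite ?Z1, ?Z2 in *;
  try lra;
  first [ specialize (LA eq_refl) | specialize (LB eq_refl)
        | specialize (N eq_refl eq_refl) ]; lra.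
Qed.
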